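(* Every partition $\pi\in\mathcal P$ is first-order definable in $\mathbf Y^*=\langle\mathcal P,\le,[1]+[1]\rangle$, i.e. for each $\pi$ there is a first-order formula $\phi_\pi(x)$ in the language $\{\le,[1]+[1]\}$ satisfied in $\mathbf Y^*$ exactly by $\pi$. Consequently, the conjugation map $\pi\mapsto\pi^\partial$ is the unique nontrivial automorphism of Young's lattice $\mathbf Y=\langle\mathcal P,\le\rangle$.
   Context: $\mathcal P$ is the set of all integer partitions, including the empty partition $\emptyset$; a partition is a nonincreasing finite sequence $(n_1,\dots,n_t)$ of positive integers. $[1]+[1]$ denotes the partition $(1,1)$. Young's lattice is $\mathbf Y=\langle\mathcal P,\le\rangle$ where $(s_1,\dots,s_r)\le(n_1,\dots,n_t)$ iff $r\le t$ and $s_i\le n_i$ for all $i\le r$ (containment of Young diagrams). $\mathbf Y^*$ is $\mathbf Y$ expanded by a constant symbol interpreted as $(1,1)$. The conjugate $\pi^\partial$ of $\pi$ is the partition whose Young diagram is the transpose of that of $\pi$. *)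

(* Defs.v *)
From mathcomp Require Import all_boot.
Set Implicit Arguments. Unset Strict Implicit. Unset Printing Implicit Defensive.

Definition is_partition (s : seq nat) : bool :=
  sorted geq s && all (fun n => 0 < n) s.

Definition ypartition := {s : seq nat | is_partition s}.

Definition le_seq (s n : seq nat) : bool :=
  (size s <= size n) && all (fun i => nth 0 s i <= nth 0 n i) (iota 0 (size s)).

Definition le_part (p q : ypartition) : bool := le_seq (val p) (val q).

Definition one_one : ypartition := exist _ [:: 1; 1] (erefl true).

(* Conjugate: the j-th part of the conjugate counts parts of size > j,
   i.e. the transpose of the Young diagram. *)
Definition conj_seq (s : seq nat) : seq nat :=
  mkseq (fun j => count (fun n => j < n) s) (head 0 s).

(* Lifted to partitions (conj_seq of a ypartition is a ypartition; the default
   branch of insubd is never used). *)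
Definition conj_part (p : ypartition) : ypartition := insubd p (conj_seq (val p)).

Inductive term : Type :=
| TVar : nat -> term
| TConst : term.

Inductive formula : Type :=
| FLe : term -> term -> formula
| FEq : term -> term -> formula
| FFalse : formula
| FNot : formula -> formula
| FAnd : formula -> formula -> formula
| FOr : formula -> formula -> formula
| FImp : formula -> formula -> formula
| FEx : nat -> formula -> formula
| FAll : nat -> formula -> formula.

Definition upd (e : nat -> ypartition) (n : nat) (v : ypartition) : nat -> ypartition :=
  fun m => if m == n then v else e m.

Definition eval_term (e : nat -> ypartition) (t : term) : ypartition :=
  match t with TVar n => e n | TConst => one_one end.

Fixpoint holds (e : nat -> ypartition) (f : formula) : Prop :=
  match f with
  | FLe t u => le_part (eval_term e t) (eval_term e u)
  | FEq t u => eval_term e t = eval_term e u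
  | FFalse => False
  | FNot g => ~ holds e g
  | FAnd g h => holds e g /\ holds e h
  | FOr g h => holds e g \/ holds e h
  | FImp g h => holds e g -> holds e h
  | FEx n g => exists v : ypartition, holds (upd e n v) g
  | FAll n g => forall v : ypartition, holds (upd e n v) g
  end.

Definition definable (pi : ypartition) : Prop :=
  exists phi : formula, forall (e : nat -> ypartition) (x : ypartition),
    holds (upd e 0 x) phi <-> x = pi.

Definition is_automorphism (f : ypartition -> ypartition) : Prop :=
  bijective f /\ forall p q, le_part p q = le_part (f p) (f q).

(* Main.v *)
Require Import Defs.
From Stdlib Require Import Setoid FunctionalExtensionality.
From mathcomp Require Import all_boot.

Definition at_ (x : ypartition) i := nth 0 (val x) i.

Lemma geq_trans : transitive geq.
Proof. move=> b a c /= h1 h2; exact: leq_trans h2 h1. Qed.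

Lemma part_head s n : is_partition s -> n \in s -> n <= head 0 s.
Proof.
case: s => [|a s] //= /andP[hs _]; rewrite inE => /orP[/eqP->//|hn].
have := order_path_min geq_trans hs => /allP /(_ _ hn) //.
Qed.

Lemma part_mono_s s i j : is_partition s -> i <= j -> nth 0 s j <= nth 0 s i.
Proof.
elim: s i j => [|a s IH] i j hp hij; first by rewrite !nth_nil.
have hs : is_partition s.
  move: hp => /andP[/= hpath /andP[_ hall]].
  by rewrite /is_partition (path_sorted hpath) hall.
case: i hij => [|i] hij /=.
  case: j hij => [|j] _ //=.
  case: (ltnP j (size s)) => hj; last by rewrite nth_default.
  have := @part_head (a :: s) (nth 0 s j) hp; apply.
  by rewrite inE mem_nth ?orbT.
case: j hij => [|j] //= hij; exact: IH.
Qed.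

Lemma part_pos s i : is_partition s -> (0 < nth 0 s i) = (i < size s).
Proof.
move=> /andP[_ /allP hp]; case: (ltnP i (size s)) => hi.
  by apply: hp; rewrite mem_nth.
by rewrite nth_default.
Qed.

Lemma at_mono x i j : i <= j -> at_ x j <= at_ x i.
Proof. by apply: part_mono_s; case: x. Qed.

Lemma at_pos x i : (0 < at_ x i) = (i < size (val x)).
Proof. by apply: part_pos; case: x. Qed.

Lemma leP_at x y : le_part x y <-> forall i, at_ x i <= at_ y i.
Proof.
rewrite /le_part /le_seq /at_; split.
  move=> /andP[hs /allP ha] i; case: (ltnP i (size (val x))) => hi.
    by apply: ha; rewrite mem_iota.
  by rewrite nth_default.
move=> h; apply/andP; split.
  case: (leqP (size (val x)) (size (val y))) => // hlt.
  have := h (size (val y)); rewrite (nth_default _ (leqnn _)).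
  have := at_pos x (size (val y)); rewrite /at_ hlt.
  by case: (nth 0 (val x) (size (val y))).
by apply/allP => i _; apply: h.
Qed.

Lemma eq_at x y : (forall i, at_ x i = at_ y i) -> x = y.
Proof.
move=> h; apply: val_inj.
have hs : size (val x) = size (val y).
  apply/eqP; rewrite eqn_leq; apply/andP; split; rewrite leqNgt; apply/negP => hl.
    by have := at_pos x (size (val y)); rewrite h at_pos hl ltnn.
  by have := at_pos y (size (val x)); rewrite -h at_pos hl ltnn.
by apply: (eq_from_nth hs) => i _; apply: h.
Qed.

Lemma le_refl x : le_part x x.
Proof. by apply/leP_at. Qed.

Lemma le_antisym x y : le_part x y -> le_part y x -> x = y.
Proof.
move=> /leP_at h1 /leP_at h2; apply: eq_at => i; apply/eqP.
by rewrite eqn_leq h1 h2.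
Qed.

Lemma le_trans x y z : le_part x y -> le_part y z -> le_part x z.
Proof. move=> /leP_at h1 /leP_at h2; apply/leP_at => i; exact: leq_trans (h1 i) (h2 i). Qed.

Definition rect a b : seq nat := if a is 0 then [::] else nseq b a.

Lemma rect_part a b : is_partition (rect a b).
Proof.
case: a => [|a] //; rewrite /is_partition /=; apply/andP; split.
  apply/(@sortedP _ _ _ 0) => i hi; rewrite !nth_nseq; rewrite size_nseq in hi.
  by rewrite hi (ltnW hi) /=.
by apply/allP => n /nseqP [->].
Qed.

Definition rectp a b : ypartition := exist _ (rect a b) (rect_part a b).

Lemma at_rect a b i : at_ (rectp a b) i = if i < b then a else 0.
Proof. rewrite /at_ /=; case: a => [|a]; first by rewrite nth_nil; case: ifP.
by rewrite nth_nseq. Qed.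

Lemma galois_s s i j : is_partition s ->
  (j < nth 0 s i) = (i < count (fun n => j < n) s).
Proof.
elim: s i => [|a s IH] i hp; first by rewrite nth_nil.
have hs : is_partition s.
  move: hp => /andP[/= hpath /andP[_ hall]].
  by rewrite /is_partition (path_sorted hpath) hall.
rewrite /=; case: (ltnP j a) => hja.
  case: i => [|i] //=; by rewrite IH.
have hall : forall n, n \in a :: s -> n <= j.
  move=> n hn; have := part_head _ _ hp hn => /= h; exact: leq_trans h hja.
rewrite add0n (eq_in_count (a2 := pred0)); last first.
  by move=> n hn /=; rewrite ltnNge hall // inE hn orbT.
rewrite count_pred0 ltn0; apply/negbTE; rewrite -leqNgt.
case: (ltnP i (size (a :: s))) => hi; last by rewrite nth_default.
by apply: hall; rewrite mem_nth.
Qed.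

Lemma nth_conj s j : is_partition s ->
  nth 0 (conj_seq s) j = count (fun n => j < n) s.
Proof.
move=> hp; rewrite /conj_seq; case: (ltnP j (head 0 s)) => hj.
  by rewrite nth_mkseq.
rewrite nth_default ?size_mkseq //.
rewrite (eq_in_count (a2 := pred0)) ?count_pred0 //.
move=> n hn /=; rewrite ltnNge; apply/negbF.
exact: leq_trans (part_head _ _ hp hn) hj.
Qed.

Lemma conj_seq_part s : is_partition s -> is_partition (conj_seq s).
Proof.
move=> hp; apply/andP; split.
  apply/(@sortedP _ _ _ 0) => i hi; rewrite !nth_conj //=.
  by apply: sub_count => n /=; apply: ltnW.
apply/allP => n; rewrite /conj_seq => /mapP [j]; rewrite mem_iota add0n => /andP[_ hj] ->.
by rewrite -galois_s //; case: s hp hj => [|a s] //= _ ->.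
Qed.

Lemma val_conj p : val (conj_part p) = conj_seq (val p).
Proof. by rewrite /conj_part insubdK //; case: p => s hs; exact: conj_seq_part. Qed.

Lemma at_conj p j : at_ (conj_part p) j = count (fun n => j < n) (val p).
Proof. by rewrite /at_ val_conj nth_conj //; case: p. Qed.

Lemma galois p i j : (j < at_ p i) = (i < at_ (conj_part p) j).
Proof. by rewrite at_conj /at_ galois_s //; case: p. Qed.

Lemma nat_eq_lt a b : (forall j, (j < a) = (j < b)) -> a = b.
Proof.
move=> h; apply/eqP; rewrite eqn_leq; apply/andP; split.
  by case: (leqP a b) => // hl; move: (h b); rewrite hl ltnn.
by case: (leqP b a) => // hl; move: (h a); rewrite hl ltnn.
Qed.

Lemma nat_le_lt a b : (a <= b) <-> (forall j, j < a -> j < b).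
Proof.
split; first by move=> h j hj; exact: leq_trans hj h.
move=> h; case: (leqP a b) => // hlt; have := h b hlt; by rewrite ltnn.
Qed.

Lemma conjK : cancel conj_part conj_part.
Proof.
move=> p; apply: eq_at => i; apply: nat_eq_lt => j.
by rewrite -galois -galois.
Qed.

Lemma conj_le p q : le_part p q = le_part (conj_part p) (conj_part q).
Proof.
apply/idP/idP => /leP_at h; apply/leP_at => i; apply/nat_le_lt => j.
  by rewrite -(galois p j i) -(galois q j i); move: (h j) => /nat_le_lt; apply.
by rewrite (galois p i j) (galois q i j); move: (h j) => /nat_le_lt; apply.
Qed.

Lemma upd_same e n v : upd e n v n = v.
Proof. by rewrite /upd eqxx. Qed.
Lemma upd_S e n v : upd e n.+1 v n = e n.
Proof. rewrite /upd; case: eqP => // h; exfalso; elim: n h => // n IH [] /IH //. Qed.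

Definition MinOf (P : nat -> formula) (v : nat) :=
  FAnd (P v) (FAll v.+1 (FImp (P v.+1) (FLe (TVar v) (TVar v.+1)))).
Definition MaxOf (P : nat -> formula) (v : nat) :=
  FAnd (P v) (FAll v.+1 (FImp (P v.+1) (FLe (TVar v.+1) (TVar v)))).
Definition GeOf (D : nat -> formula) (w : nat) :=
  FEx w.+1 (FAnd (D w.+1) (FLe (TVar w.+1) (TVar w))).
Definition FTrue := FNot FFalse.
Arguments GeOf : simpl never.

Lemma MinOf_sem P (S : ypartition -> Prop) a :
  (forall e w, holds e (P w) <-> S (e w)) -> S a -> (forall y, S y -> le_part a y) ->
  forall e v, holds e (MinOf P v) <-> e v = a.
Proof.
move=> hP hSa hmin e v /=; rewrite hP; split.
  move=> [hS hall]; apply: le_antisym; last exact: hmin.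
  have := hall a; rewrite /= upd_same upd_S; apply; apply/hP; by rewrite upd_same.
move=> hv; split; first by rewrite hv.
move=> y /(proj1 (hP _ _)); rewrite upd_same => h.
rewrite /= upd_S hv; exact: hmin.
Qed.

Lemma MaxOf_sem P (S : ypartition -> Prop) a :
  (forall e w, holds e (P w) <-> S (e w)) -> S a -> (forall y, S y -> le_part y a) ->
  forall e v, holds e (MaxOf P v) <-> e v = a.
Proof.
move=> hP hSa hmax e v /=; rewrite hP; split.
  move=> [hS hall]; apply: le_antisym; first exact: hmax.
  have := hall a; rewrite /= upd_same upd_S; apply; apply/hP; by rewrite upd_same.
move=> hv; split; first by rewrite hv.
move=> y /(proj1 (hP _ _)); rewrite upd_same => h.
rewrite /= upd_S hv; exact: hmax.
Qed.

Lemma GeOf_sem D a : (forall e v, holds e (D v) <-> e v = a) ->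
  forall e w, holds e (GeOf D w) <-> le_part a (e w).
Proof.
move=> hD e w /=; split.
  by move=> [y]; rewrite hD upd_same upd_S => -[->].
by move=> h; exists a; rewrite hD upd_same upd_S.
Qed.

Arguments MinOf : simpl never.
Arguments MaxOf : simpl never.

Lemma bot_min b y : le_part (rectp 0 b) y.
Proof. by apply/leP_at => i; rewrite at_rect; case: ifP. Qed.

Lemma le_c x : le_part one_one x <-> 0 < at_ x 1.
Proof.
have hc : forall i, at_ one_one i = if i < 2 then 1 else 0.
  by case=> [|[|i]] //; rewrite /at_ /= nth_nil.
split.
  by move/leP_at => /(_ 1); rewrite hc.
move=> h; apply/leP_at => i; rewrite hc; case: ifP => // hi.
by apply: leq_trans h (at_mono x _ _ _); case: i hi => [|[|]].
Qed.

Fixpoint Rrow n v : formula :=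
  match n with
  | 0 => MinOf (fun _ => FTrue) v
  | n'.+1 => MinOf (fun w => FAnd (FNot (FLe TConst (TVar w)))
       (FEx w.+1 (FAnd (Rrow n' w.+1) (FAnd (FLe (TVar w.+1) (TVar w))
                        (FNot (FLe (TVar w) (TVar w.+1))))))) v
  end.

Arguments Rrow : simpl never.
Lemma Rrow_sem n : forall e v, holds e (Rrow n v) <-> e v = rectp n 1.
Proof.
elim: n => [|n IH].
  apply: (MinOf_sem _ (fun _ => True)).
  - by move=> e0 w /=; split => // _ [].
  - by [].
  - move=> y _; exact: bot_min.
pose S x := at_ x 1 = 0 /\ le_part (rectp n 1) x /\ ~ le_part x (rectp n 1).
apply: (MinOf_sem _ S).
- move=> e w /=; rewrite le_c; split.
    move=> [h1 [y]]; rewrite IH upd_same upd_S => -[-> [h2 h3]].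
    by split; [case: (at_ (e w) 1) h1|].
  move=> [h1 [h2 h3]]; split; first by rewrite h1.
  by exists (rectp n 1); rewrite IH upd_same upd_S.
- split; first by rewrite at_rect.
  split; first by apply/leP_at => i; rewrite !at_rect; case: ifP.
  by move/leP_at => /(_ 0); rewrite !at_rect /= ltnn.
- move=> y [h1 [h2 h3]]; apply/leP_at => i; rewrite at_rect.
  case: i => [|i] /=; last by [].
  case: (leqP (at_ y 0) n) => // hle; exfalso; apply: h3; apply/leP_at => i.
  rewrite at_rect; case: i => [|i] //=.
  have := at_mono y 1 i.+1 isT; rewrite h1; by case: (at_ y i.+1).
Qed.

Lemma le_rect a b x : 0 < b -> le_part (rectp a b) x <-> a <= at_ x b.-1.
Proof.
move=> hb; split.
  by move/leP_at => /(_ b.-1); rewrite at_rect prednK ?leqnn // ltn_predL hb.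
move=> h; apply/leP_at => i; rewrite at_rect; case: ifP => // hi.
apply: leq_trans h (at_mono _ _ _ _); by rewrite -ltnS prednK.
Qed.

Definition ColStep (C : nat -> formula) w := FAnd (FNot (GeOf (Rrow 2) w))
       (FEx w.+1 (FAnd (C w.+1) (FAnd (FLe (TVar w.+1) (TVar w))
                        (FNot (FLe (TVar w) (TVar w.+1)))))).
Fixpoint Ccol n v : formula :=
  match n with
  | 0 => MinOf (fun _ => FTrue) v
  | n'.+1 => MinOf (ColStep (Ccol n')) v
  end.
Lemma hAnd e a b : holds e (FAnd a b) <-> holds e a /\ holds e b. Proof. by []. Qed.
Lemma hNot e a : holds e (FNot a) <-> ~ holds e a. Proof. by []. Qed.
Lemma hEx e n a : holds e (FEx n a) <-> exists v, holds (upd e n v) a. Proof. by []. Qed.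
Lemma hLe e t u : holds e (FLe t u) <-> le_part (eval_term e t) (eval_term e u). Proof. by []. Qed.

Arguments Ccol : simpl never.
Lemma Ccol_sem n : forall e v, holds e (Ccol n v) <-> e v = rectp 1 n.
Proof.
elim: n => [|n IH].
  apply: (MinOf_sem _ (fun _ => True)).
  - by move=> e0 w /=; split => // _ [].
  - by [].
  - move=> y _; apply/leP_at => i; by rewrite at_rect.
pose S x := at_ x 0 < 2 /\ le_part (rectp 1 n) x /\ ~ le_part x (rectp 1 n).
apply: (MinOf_sem (ColStep (Ccol n)) S).
- move=> e w; rewrite /ColStep hAnd hNot (GeOf_sem _ _ (Rrow_sem 2)) hEx le_rect //; split.
    move=> [h1 [y]]; rewrite hAnd IH hAnd !hLe hNot hLe /= !upd_same !upd_S => -[-> [h2 h3]].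
    by split; [rewrite ltnNge; apply/negP|].
  move=> [h1 [h2 h3]]; split; first by apply/negP; rewrite -ltnNge.
  by exists (rectp 1 n); rewrite hAnd IH hAnd !hLe hNot hLe /= upd_same upd_S.
- split; first by rewrite at_rect.
  split; first by apply/leP_at => i; rewrite !at_rect; case: (ltnP i n) => h; [rewrite ltnS (ltnW h) | case: ifP].
  by move/leP_at => /(_ n); rewrite !at_rect ltnn ltnSn.
- move=> y [h1 [h2 h3]]; apply/le_rect => //=.
  case: (posnP (at_ y n)) => // h0; exfalso; apply: h3; apply/leP_at => i.
  rewrite at_rect; case: ifP => hi.
    by rewrite -ltnS; apply: leq_trans h1; rewrite ltnS at_mono.
  have := at_mono y n i; rewrite h0 leqNgt hi => /(_ isT); by case: (at_ y i).
Qed.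

Definition Rect a b v :=
  MaxOf (fun w => FAnd (FNot (GeOf (Rrow a.+1) w)) (FNot (GeOf (Ccol b.+1) w))) v.

Arguments Rect : simpl never.
Lemma Rect_sem a b : forall e v, holds e (Rect a b v) <-> e v = rectp a b.
Proof.
pose S x := ~ le_part (rectp a.+1 1) x /\ ~ le_part (rectp 1 b.+1) x.
apply: (MaxOf_sem _ S).
- by move=> e w; cbv beta; rewrite hAnd !hNot (GeOf_sem _ _ (Rrow_sem _)) (GeOf_sem _ _ (Ccol_sem _)).
- split; rewrite le_rect //= at_rect ?ltnn //.
  by case: ifP => _; rewrite ?ltnn.
- move=> y [h1 h2].
  have {}h1 : at_ y 0 < a.+1 by rewrite ltnS leqNgt; apply/negP => h; apply: h1; apply/le_rect.
  have hb : at_ y b = 0.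
    case: (posnP (at_ y b)) => // hp; exfalso; apply: h2; exact/le_rect.
  apply/leP_at => i; rewrite at_rect; case: ifP => hi.
    by rewrite -ltnS; apply: leq_trans h1; rewrite ltnS at_mono.
  have := at_mono y b i; rewrite hb leqNgt hi => /(_ isT); by case: (at_ y i).
Qed.

Definition bigand (l : seq formula) := foldr FAnd FTrue l.

Arguments bigand : simpl never.
Lemma bigand_sem (F : nat -> formula) l e :
  holds e (bigand (map F l)) <-> forall i, i \in l -> holds e (F i).
Proof.
elim: l => [|a l IH] /=; first by split => // _ [].
rewrite IH; split.
  by move=> [ha hl] i; rewrite inE => /orP[/eqP ->|/hl].
by move=> h; split; [apply: h; rewrite inE eqxx | move=> i hi; apply: h; rewrite inE hi orbT].
Qed.

Definition Part (p : ypartition) v :=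
  MaxOf (fun w => bigand (map (fun i => FNot (GeOf (Rect (at_ p i).+1 i.+1) w))
                               (iota 0 (size (val p)).+1))) v.

Lemma Part_sem p : forall e v, holds e (Part p v) <-> e v = p.
Proof.
pose k := size (val p).
pose S x := forall i, i < k.+1 -> ~ le_part (rectp (at_ p i).+1 i.+1) x.
apply: (MaxOf_sem _ S).
- move=> e w; rewrite bigand_sem; split.
    move=> h i hi; have := h i; rewrite mem_iota add0n => /(_ hi).
    by rewrite hNot (GeOf_sem _ _ (Rect_sem _ _)).
  move=> h i; rewrite mem_iota add0n => /h.
  by rewrite hNot (GeOf_sem _ _ (Rect_sem _ _)).
- by move=> i _; rewrite le_rect //= ltnn.
- move=> y hS.
  have hle : forall j, j <= k -> at_ y j <= at_ p j.
    move=> j hj; case: (leqP (at_ y j) (at_ p j)) => // hlt; exfalso.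
    by apply: (hS j); rewrite ?ltnS // le_rect.
  apply/leP_at => j; case: (leqP j k) => hj; first exact: hle.
  have hk : at_ p k = 0 by apply/eqP; rewrite eqn0Ngt at_pos ltnn.
  have := hle k (leqnn _); rewrite hk => h0.
  have := at_mono y k j (ltnW hj); rewrite leqn0 in h0; rewrite (eqP h0).
  by case: (at_ y j).
Qed.

Lemma all_definable pi : definable pi.
Proof. exists (Part pi 0) => e x; rewrite Part_sem upd_same; by []. Qed.

Section Auto.
Variables (f g : ypartition -> ypartition).
Hypotheses (fK : cancel f g) (gK : cancel g f)
  (hle : forall p q, le_part p q = le_part (f p) (f q)).

Lemma comp_upd e n v : (fun m => f (upd e n v m)) = upd (fun m => f (e m)) n (f v).
Proof. apply: functional_extensionality => m; rewrite /upd; by case: ifP. Qed.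

Lemma holds_f (hc : f one_one = one_one) phi : forall e,
  holds e phi <-> holds (fun m => f (e m)) phi.
Proof.
have ht : forall e t, eval_term (fun m => f (e m)) t = f (eval_term e t).
  by move=> e [n|] //=; rewrite hc.
elim: phi => [t u|t u||a IHa|a IHa b IHb|a IHa b IHb|a IHa b IHb|n a IHa|n a IHa] e /=.
- by rewrite !ht -hle.
- rewrite !ht; split; [by move=> -> | exact: (can_inj fK)].
- by [].
- by rewrite IHa.
- by rewrite IHa IHb.
- by rewrite IHa IHb.
- by rewrite IHa IHb.
- split.
    by move=> [v]; rewrite IHa comp_upd => h; exists (f v).
  move=> [w h]; exists (g w); rewrite IHa comp_upd gK //.
- split.
    move=> h w; have := h (g w); rewrite IHa comp_upd gK //.
  by move=> h v; rewrite IHa comp_upd.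
Qed.

Lemma fix_all (hc : f one_one = one_one) p : f p = p.
Proof.
have h1 : holds (fun _ => p) (Part p 0) by apply/Part_sem.
by have := (holds_f hc (Part p 0) (fun _ => p)).1 h1 => /(Part_sem _ _ 0).
Qed.

Lemma f_bot : f (rectp 0 0) = rectp 0 0.
Proof.
apply: le_antisym; last exact: bot_min.
have := bot_min 0 (g (rectp 0 0)); by rewrite hle gK.
Qed.

Lemma nonbot x : x <> rectp 0 0 -> 0 < at_ x 0.
Proof.
move=> hx; case: (posnP (at_ x 0)) => // h0; exfalso; apply: hx; apply: eq_at => i.
rewrite at_rect /=; have := at_mono x 0 i isT; rewrite h0; by case: (at_ x i).
Qed.

Lemma one_char x : x <> rectp 0 0 -> (forall y, y <> rectp 0 0 -> le_part y x -> y = x) ->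
  x = rectp 1 1.
Proof.
move=> hx h; symmetry; apply: h.
  by move/(f_equal val).
apply/le_rect => //=; exact: nonbot.
Qed.

Lemma one_prop y : y <> rectp 0 0 -> le_part y (rectp 1 1) -> y = rectp 1 1.
Proof.
move=> hy /leP_at hl; apply: eq_at => i; rewrite at_rect.
have := hl i; rewrite at_rect; case: ifP => hi.
  case: i hi => // _ h; apply/eqP; rewrite eqn_leq h; exact: nonbot hy.
by case: (at_ y i).
Qed.

Lemma f_one : f (rectp 1 1) = rectp 1 1.
Proof.
apply: one_char.
  move=> h; have : f (rectp 1 1) = f (rectp 0 0) by rewrite h f_bot.
  by move/(can_inj fK)/(f_equal val).
move=> y hy; rewrite -(gK y) -hle => hl; congr f; apply: one_prop => // h.
by apply: hy; rewrite -(gK y) h f_bot.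
Qed.

Lemma at_c i : at_ one_one i = if i < 2 then 1 else 0.
Proof. by case: i => [|[|i]] //; rewrite /at_ /= nth_nil. Qed.

Definition cprop x := x <> rectp 1 1 /\ le_part (rectp 1 1) x /\ forall y, le_part (rectp 1 1) y -> le_part y x -> y = rectp 1 1 \/ y = x.

Lemma cprop_c : cprop one_one.
Proof.
split; first by move/(f_equal val).
split; first by [].
move=> y /le_rect => /(_ isT) /= h0 /leP_at hl.
have h1 : at_ y 0 = 1 by apply/eqP; rewrite eqn_leq h0 andbT; have := hl 0; rewrite at_c.
have hi : forall i, 1 < i -> at_ y i = 0.
  by move=> i hi; have := hl i; rewrite at_c ltnNge hi /=; case: (at_ y i).
case: (posnP (at_ y 1)) => h2.
  left; apply: eq_at => i; rewrite at_rect; case: i => [|[|i]] //; exact: hi.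
right; apply: eq_at => i; rewrite at_c; case: i => [|[|i]] //; last exact: hi.
by apply/eqP; rewrite eqn_leq h2 andbT; have := hl 1; rewrite at_c.
Qed.

Lemma cprop_char x : cprop x -> x = one_one \/ x = rectp 2 1.
Proof.
move=> [hx [h1 h]]; move/le_rect: h1 => /(_ isT) /= h1.
case: (leqP 2 (at_ x 0)) => h2.
  have := h (rectp 2 1); rewrite le_rect // => /(_ isT).
  rewrite le_rect // => /(_ h2) [/(f_equal val) //|]; by right.
have hx0 : at_ x 0 = 1 by apply/eqP; rewrite eqn_leq h1 andbT -ltnS.
case: (posnP (at_ x 1)) => hx1.
  exfalso; apply: hx; apply: eq_at => i; rewrite at_rect; case: i => [|i] //=.
  have := at_mono x 1 i.+1 isT; rewrite hx1; by case: (at_ x i.+1).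
have : le_part one_one x by apply/le_c.
move/h => /(_ isT) [/(f_equal val) //|]; by left.
Qed.

Lemma f_c : f one_one = one_one \/ f one_one = rectp 2 1.
Proof.
apply: cprop_char; have [hc1 [hc2 hc3]] := cprop_c.
split.
  by rewrite -f_one => /(can_inj fK).
split; first by rewrite -f_one -hle.
move=> y h1 h2; rewrite -(gK y) in h1 h2 *.
rewrite -f_one -!hle in h1 h2.
by case: (hc3 _ h1 h2) => ->; [left; rewrite f_one | right].
Qed.
End Auto.

Theorem proposition3p3 :
  (forall pi : ypartition, definable pi) /\
  (is_automorphism conj_part /\
   (exists p : ypartition, conj_part p <> p) /\
   forall f : ypartition -> ypartition, is_automorphism f ->
     (forall p, f p = p) \/ (forall p, f p = conj_part p)).
Proof.
split; first exact: all_definable.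
split; first by split; [exists conj_part; apply: conjK | exact: conj_le].
split.
  by exists one_one; move/(f_equal val); rewrite val_conj.
move=> f [[g fK gK] hle].
case: (f_c _ _ fK gK hle) => hc; first by left; exact: (fix_all _ _ fK gK hle hc).
right.
have hK1 : cancel (fun p => conj_part (f p)) (fun p => g (conj_part p)).
  by move=> p; rewrite conjK fK.
have hK2 : cancel (fun p => g (conj_part p)) (fun p => conj_part (f p)).
  by move=> p; rewrite gK conjK.
have hle2 : forall p q, le_part p q = le_part (conj_part (f p)) (conj_part (f q)).
  by move=> p q; rewrite -conj_le.
have hc2 : conj_part (f one_one) = one_one.
  by rewrite hc; apply: val_inj; rewrite val_conj.
move=> p; have /= h := fix_all _ _ hK1 hK2 hle2 hc2 p.
by rewrite -[in RHS]h conjK.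
Qed.
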